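(* Let $G_0$ be the group of homeomorphisms of $\mathbb{R}$ defined in the context. Then $G_0'=G_0''$.
   Context: $G_0$ is the group of homeomorphisms of $\mathbb{R}$ generated by the following maps: - $a(t)=t+1$; - $b$, where $b(t)=t$ for $t\le 0$, $b(t)=t/(1-t)$ for $0\le t\le 1/2$, $b(t)=(3t-1)/t$ for $1/2\le t\le 1$, and $b(t)=t+1$ for $t\ge 1$; - $c$, where $c(t)=2t/(t+1)$ for $0\le t\le 1$ and $c(t)=t$ otherwise. $G_0'$ is the commutator subgroup and $G_0''=(G_0')'$. *)

(* Defs.v *)
From Stdlib Require Import Reals.
Open Scope R_scope.

Definition gen_a (t : R) : R := t + 1.

Definition gen_b (t : R) : R :=
  if Rle_dec t 0 then t
  else if Rle_dec t (1/2) then t / (1 - t)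
  else if Rle_dec t 1 then (3 * t - 1) / t
  else t + 1.

Definition gen_c (t : R) : R :=
  if Rle_dec 0 t then (if Rle_dec t 1 then 2 * t / (t + 1) else t) else t.

Definition is_inverse (f g : R -> R) : Prop :=
  (forall x, g (f x) = x) /\ (forall y, f (g y) = y).

Inductive gen_group (S : (R -> R) -> Prop) : (R -> R) -> Prop :=
  | gg_gen  : forall f, S f -> gen_group S f
  | gg_id   : gen_group S (fun x => x)
  | gg_comp : forall f g, gen_group S f -> gen_group S g ->
                gen_group S (fun x => f (g x))
  | gg_inv  : forall f g, gen_group S f -> is_inverse f g -> gen_group S g.

Definition G0 : (R -> R) -> Prop :=
  gen_group (fun f => f = gen_a \/ f = gen_b \/ f = gen_c).

Definition commutators (H : (R -> R) -> Prop) : (R -> R) -> Prop :=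
  fun h => exists f g fi gi, H f /\ H g /\ is_inverse f fi /\ is_inverse g gi /\
    h = (fun x => fi (gi (f (g x)))).

Definition derived (H : (R -> R) -> Prop) : (R -> R) -> Prop :=
  gen_group (commutators H).

(* Main.v *)
Require Import Defs.
From Stdlib Require Import Reals Lra FunctionalExtensionality Classical.
Open Scope R_scope.

Definition binv (t : R) : R :=
  if Rle_dec t 0 then t
  else if Rle_dec t 1 then t / (1 + t)
  else if Rle_dec t 2 then 1 / (3 - t)
  else t - 1.

Definition cinv (t : R) : R :=
  if Rle_dec 0 t then (if Rle_dec t 1 then t / (2 - t) else t) else t.

Lemma b_binv : is_inverse gen_b binv.
Proof.
  split.
  - intro x. unfold gen_b.
    destruct (Rle_dec x 0) as [h0|h0].
    + unfold binv. destruct (Rle_dec x 0); lra.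
    + destruct (Rle_dec x (1/2)) as [h1|h1].
      * set (y := x / (1 - x)).
        assert (E : y * (1 - x) = x) by (unfold y; field; lra).
        unfold binv. destruct (Rle_dec y 0). { nra. }
        destruct (Rle_dec y 1). { unfold y. field. split; lra. }
        nra.
      * destruct (Rle_dec x 1) as [h2|h2].
        -- set (y := (3 * x - 1) / x).
           assert (E : y * x = 3 * x - 1) by (unfold y; field; lra).
           unfold binv. destruct (Rle_dec y 0). { nra. }
           destruct (Rle_dec y 1). { nra. }
           destruct (Rle_dec y 2).
           ++ assert (E2 : 3 - y = 1 / x) by (unfold y; field; lra).
              rewrite E2. field. lra.
           ++ nra.
        -- unfold binv. destruct (Rle_dec (x+1) 0). lra.
           destruct (Rle_dec (x+1) 1). lra.
           destruct (Rle_dec (x+1) 2). lra. lra.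
  - intro y. unfold binv.
    destruct (Rle_dec y 0) as [h0|h0].
    + unfold gen_b. destruct (Rle_dec y 0); lra.
    + destruct (Rle_dec y 1) as [h1|h1].
      * set (x := y / (1 + y)).
        assert (E : x * (1 + y) = y) by (unfold x; field; lra).
        unfold gen_b. destruct (Rle_dec x 0). { nra. }
        destruct (Rle_dec x (1/2)). { unfold x. field. split; lra. }
        nra.
      * destruct (Rle_dec y 2) as [h2|h2].
        -- set (x := 1 / (3 - y)).
           assert (E : x * (3 - y) = 1) by (unfold x; field; lra).
           unfold gen_b. destruct (Rle_dec x 0). { nra. }
           destruct (Rle_dec x (1/2)). { nra. }
           destruct (Rle_dec x 1).
           ++ unfold x. field. lra.
           ++ nra.
        -- unfold gen_b. destruct (Rle_dec (y-1) 0). lra.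
           destruct (Rle_dec (y-1) (1/2)). lra.
           destruct (Rle_dec (y-1) 1). lra. lra.
Qed.

Lemma c_cinv : is_inverse gen_c cinv.
Proof.
  split.
  - intro x. unfold gen_c.
    destruct (Rle_dec 0 x) as [h0|h0].
    + destruct (Rle_dec x 1) as [h1|h1].
      * set (y := 2 * x / (x + 1)).
        assert (E : y * (x + 1) = 2 * x) by (unfold y; field; lra).
        unfold cinv. destruct (Rle_dec 0 y). 2: nra.
        destruct (Rle_dec y 1). 2: nra.
        unfold y. field. split; lra.
      * unfold cinv. destruct (Rle_dec 0 x); [|lra]. destruct (Rle_dec x 1); lra.
    + unfold cinv. destruct (Rle_dec 0 x); lra.
  - intro y. unfold cinv.
    destruct (Rle_dec 0 y) as [h0|h0].
    + destruct (Rle_dec y 1) as [h1|h1].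
      * set (x := y / (2 - y)).
        assert (E : x * (2 - y) = y) by (unfold x; field; lra).
        unfold gen_c. destruct (Rle_dec 0 x). 2: nra.
        destruct (Rle_dec x 1). 2: nra.
        unfold x. field. split; lra.
      * unfold gen_c. destruct (Rle_dec 0 y); [|lra]. destruct (Rle_dec y 1); lra.
    + unfold gen_c. destruct (Rle_dec 0 y); lra.
Qed.

Lemma gg_ext S f g : gen_group S f -> (forall t, f t = g t) -> gen_group S g.
Proof. intros H E. replace g with f; [exact H| apply functional_extensionality; exact E]. Qed.

Lemma inv_sym f g : is_inverse f g -> is_inverse g f.
Proof. intros [H1 H2]; split; auto. Qed.

Lemma inv_unique f g1 g2 : is_inverse f g1 -> is_inverse f g2 -> forall t, g1 t = g2 t.
Proof. intros [A B] [C D] t. rewrite <- (D t) at 1. rewrite A. reflexivity. Qed.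

Lemma inv_comp f fi g gi : is_inverse f fi -> is_inverse g gi ->
  is_inverse (fun t => f (g t)) (fun t => gi (fi t)).
Proof. intros [A B] [C D]; split; intro t; cbv beta. rewrite A, C; auto. rewrite D, B; auto. Qed.

Ltac split_inv := repeat match goal with H : is_inverse _ _ |- _ =>
  let A := fresh "IA" in let B := fresh "IB" in destruct H as [A B] end.
Ltac inv_simp := repeat match goal with
 | H : forall x, ?g (?f x) = x |- context [?g (?f ?y)] => rewrite (H y)
 end.

Lemma G0_a : G0 gen_a. Proof. apply gg_gen; auto. Qed.
Lemma G0_b : G0 gen_b. Proof. apply gg_gen; auto. Qed.
Lemma G0_c : G0 gen_c. Proof. apply gg_gen; auto. Qed.

Lemma G0_inv f : G0 f -> exists fi, is_inverse f fi.
Proof.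
  intro H; induction H as [f Hs | | f g _ [fi Hf] _ [gi Hg] | f g _ [fi Hf] Hfg].
  - destruct Hs as [ -> | [ -> | -> ] ].
    + exists (fun t => t - 1). split; intro; unfold gen_a; lra.
    + exists binv; apply b_binv.
    + exists cinv; apply c_cinv.
  - exists (fun x => x); split; reflexivity.
  - exists (fun t => gi (fi t)); apply inv_comp; auto.
  - exists f; apply inv_sym; auto.
Qed.

Lemma G0_conj k h hi : G0 k -> G0 h -> is_inverse h hi -> G0 (fun t => hi (k (h t))).
Proof. intros Hk Hh Hi. exact (gg_comp _ _ _ (gg_inv _ _ _ Hh Hi) (gg_comp _ _ _ Hk Hh)). Qed.

Lemma gen_conj (S : (R -> R) -> Prop) :
  (forall k h hi, S k -> G0 h -> is_inverse h hi -> S (fun t => hi (k (h t)))) ->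
  forall k h hi, gen_group S k -> G0 h -> is_inverse h hi -> gen_group S (fun t => hi (k (h t))).
Proof.
  intros HS k h hi Hk Hh Hi. pose proof Hi as Hi'. destruct Hi' as [A B].
  induction Hk as [f Hf | | f g Hf IHf Hg IHg | f g Hf IHf Hfg].
  - apply gg_gen; auto.
  - eapply gg_ext; [apply gg_id|]. intro t; cbv beta. rewrite A; auto.
  - eapply gg_ext; [exact (gg_comp _ _ _ IHf IHg)|]. intro t; cbv beta. rewrite B; auto.
  - apply (gg_inv _ _ _ IHf). destruct Hfg as [C D]. split; intro t; cbv beta.
    + rewrite B, C, A; auto.
    + rewrite B, D, A; auto.
Qed.

Lemma comm_conj (H : (R -> R) -> Prop) :
  (forall k h hi, H k -> G0 h -> is_inverse h hi -> H (fun t => hi (k (h t)))) ->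
  forall k h hi, commutators H k -> G0 h -> is_inverse h hi -> commutators H (fun t => hi (k (h t))).
Proof.
  intros HH k h hi [f [g [fi [gi [Hf [Hg [Ifi [Igi ->]]]]]]]] Hh Hi.
  exists (fun t => hi (f (h t))), (fun t => hi (g (h t))),
         (fun t => hi (fi (h t))), (fun t => hi (gi (h t))).
  split; [auto|]. split; [auto|].
  pose proof Hi as Hi'; destruct Hi' as [A B].
  split; [destruct Ifi as [C D]; split; intro t; cbv beta; rewrite ?B, ?C, ?D; auto|].
  split; [destruct Igi as [C D]; split; intro t; cbv beta; rewrite ?B, ?C, ?D; auto|].
  apply functional_extensionality; intro t; cbv beta. rewrite !B. reflexivity.
Qed.

Lemma D1_conj k h hi : derived G0 k -> G0 h -> is_inverse h hi -> derived G0 (fun t => hi (k (h t))).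
Proof. apply gen_conj. apply comm_conj. apply G0_conj. Qed.

Definition K := derived (derived G0).

Lemma K_conj k h hi : K k -> G0 h -> is_inverse h hi -> K (fun t => hi (k (h t))).
Proof. apply gen_conj. apply comm_conj. apply D1_conj. Qed.

Definition KC (x y : R -> R) := forall xi yi, is_inverse x xi -> is_inverse y yi ->
  K (fun t => xi (yi (x (y t)))).

Lemma KC_ext x y x' y' : KC x y -> (forall t, x t = x' t) -> (forall t, y t = y' t) -> KC x' y'.
Proof.
  intros H E1 E2. apply functional_extensionality in E1, E2. subst. exact H.
Qed.

Lemma KC_swap x y : KC x y -> KC y x.
Proof.
  intros H yi xi Hy Hx. apply (gg_inv _ _ _ (H xi yi Hx Hy)). split_inv.
  split; intro t; cbv beta; inv_simp; reflexivity.
Qed.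

Lemma KC_self x : KC x x.
Proof.
  intros xi xi' H1 H2. eapply gg_ext; [apply gg_id|]. intro t; cbv beta.
  rewrite (inv_unique _ _ _ H2 H1). split_inv. inv_simp. reflexivity.
Qed.

Lemma KC_id_r x : KC x (fun t => t).
Proof.
  intros xi yi H1 H2. eapply gg_ext; [apply gg_id|]. intro t; cbv beta.
  destruct H2 as [C D]. cbv beta in C. rewrite C. destruct H1 as [A B]. rewrite A; auto.
Qed.

Lemma KC_id_l y : KC (fun t => t) y.
Proof. apply KC_swap, KC_id_r. Qed.

Lemma KC_comp x1 x2 y : G0 x1 -> G0 x2 -> KC x1 y -> KC x2 y -> KC (fun t => x1 (x2 t)) y.
Proof.
  intros G1 G2 H1 H2 xi yi Hx Hy.
  destruct (G0_inv x1 G1) as [x1i I1]. destruct (G0_inv x2 G2) as [x2i I2].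
  pose proof (K_conj _ x2 x2i (H1 x1i yi I1 Hy) G2 I2) as Ka.
  pose proof (H2 x2i yi I2 Hy) as Kb.
  eapply gg_ext; [exact (gg_comp _ _ _ Ka Kb)|]. intro t; cbv beta.
  rewrite (inv_unique _ _ _ Hx (inv_comp _ _ _ _ I1 I2)). cbv beta.
  split_inv. inv_simp. reflexivity.
Qed.

Lemma KC_inv x x' y : G0 x -> is_inverse x x' -> G0 y -> KC y x -> KC x' y.
Proof.
  intros Gx Ix Gy H xi' yi Hx' Hy.
  pose proof (K_conj _ x' x (H yi x' Hy Ix) (gg_inv _ _ _ Gx Ix) (inv_sym _ _ Ix)) as Ka.
  eapply gg_ext; [exact Ka|]. intro t; cbv beta.
  rewrite (inv_unique _ _ _ Hx' (inv_sym _ _ Ix)). split_inv. inv_simp. reflexivity.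
Qed.

Lemma comm_inv x xi w wi : is_inverse x xi -> is_inverse w wi ->
  (forall t, w (x t) = x (w t)) -> forall s, xi (wi s) = wi (xi s).
Proof.
  intros Ix Iw C s.
  assert (E : w (x (xi (wi s))) = w (x (wi (xi s)))).
  { rewrite (C (wi (xi s))). split_inv. inv_simp. reflexivity. }
  apply (f_equal (fun z => xi (wi z))) in E. split_inv. cbv beta in E. rewrite !IA, !IA0 in E. exact E.
Qed.

Lemma KC_R x y w : G0 x -> G0 y -> G0 w -> (forall t, w (x t) = x (w t)) ->
  KC x (fun t => y (w t)) -> KC x y.
Proof.
  intros Gx Gy Gw C H xi yi Hx Hy.
  destruct (G0_inv w Gw) as [wi Iw].
  pose proof (K_conj _ wi w (H xi _ Hx (inv_comp _ _ _ _ Hy Iw)) (gg_inv _ _ _ Gw Iw) (inv_sym _ _ Iw)) as Ka.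
  eapply gg_ext; [exact Ka|]. intro t; cbv beta.
  rewrite (comm_inv _ _ _ _ Hx Iw C). split_inv. inv_simp. reflexivity.
Qed.

Lemma KC_L x y z : G0 x -> G0 y -> G0 z -> (forall t, z (y t) = y (z t)) ->
  KC (fun t => x (z t)) y -> KC x y.
Proof.
  intros Gx Gy Gz C H xi yi Hx Hy.
  destruct (G0_inv z Gz) as [zi Iz].
  pose proof (K_conj _ zi z (H _ yi (inv_comp _ _ _ _ Hx Iz) Hy) (gg_inv _ _ _ Gz Iz) (inv_sym _ _ Iz)) as Ka.
  eapply gg_ext; [exact Ka|]. intro t; cbv beta.
  rewrite C. split_inv. inv_simp. reflexivity.
Qed.

Definition supp_in (f : R -> R) (P : R -> Prop) := forall t, ~ P t -> f t = t.

Lemma supp_maps f fi P : is_inverse f fi -> supp_in f P -> forall t, P t -> P (f t).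
Proof.
  intros [A B] S t Pt. destruct (classic (P (f t))) as [H|N]; auto.
  pose proof (S _ N) as E. apply (f_equal fi) in E. rewrite !A in E. rewrite E. auto.
Qed.

Lemma supp_comm f fi g gi P Q : is_inverse f fi -> is_inverse g gi -> supp_in f P -> supp_in g Q ->
  (forall t, P t -> Q t -> False) -> forall t, f (g t) = g (f t).
Proof.
  intros If Ig Sf Sg D t.
  destruct (classic (P t)) as [Pt|Pt].
  - pose proof (supp_maps _ _ _ If Sf t Pt) as Pft.
    rewrite (Sg (f t)), (Sg t). reflexivity. all: intro HQ; first [exact (D _ Pt HQ) | exact (D _ Pft HQ)].
  - destruct (classic (Q t)) as [Qt|Qt].
    + pose proof (supp_maps _ _ _ Ig Sg t Qt) as Qgt.
      rewrite (Sf (g t)), (Sf t). reflexivity. all: intro HP; first [exact (D _ HP Qt) | exact (D _ HP Qgt)].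
    + rewrite (Sf t Pt), (Sg t Qt), (Sf t Pt). reflexivity.
Qed.

Lemma supp_inv f fi P : is_inverse f fi -> supp_in f P -> supp_in fi P.
Proof. intros [A B] S t N. pose proof (A t) as E. rewrite (S t N) in E. exact E. Qed.

Lemma supp_compose f g P : supp_in f P -> supp_in g P -> supp_in (fun t => f (g t)) P.
Proof. intros Sf Sg t N. cbv beta. rewrite (Sg t N). apply Sf; auto. Qed.

Lemma supp_mono f (P Q : R -> Prop) : supp_in f P -> (forall t, P t -> Q t) -> supp_in f Q.
Proof. intros S H t N. apply S. intro; apply N; auto. Qed.

Lemma supp_shift f p q T : supp_in f (fun t => p < t < q) ->
  supp_in (fun t => f (t - T) + T) (fun t => p + T < t < q + T).
Proof. intros S t N. cbv beta. rewrite S. lra. intro; apply N; lra. Qed.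

Lemma shift_inv f fi T : is_inverse f fi ->
  is_inverse (fun t => f (t - T) + T) (fun t => fi (t - T) + T).
Proof.
  intros [A B]; split; intro t; cbv beta.
  - replace (f (t - T) + T - T) with (f (t - T)) by ring. rewrite A. ring.
  - replace (fi (t - T) + T - T) with (fi (t - T)) by ring. rewrite B. ring.
Qed.

Lemma G0_sh n : G0 (fun t => t + INR n).
Proof.
  induction n.
  - eapply gg_ext; [apply gg_id|]. intro; simpl; lra.
  - eapply gg_ext; [exact (gg_comp _ _ _ G0_a IHn)|]. intro t; cbv beta; unfold gen_a.
    rewrite S_INR; lra.
Qed.

Lemma G0_shi n : G0 (fun t => t - INR n).
Proof. apply (gg_inv _ _ _ (G0_sh n)). split; intro; lra. Qed.

Lemma G0_shift f T (n : nat) : T = INR n -> G0 f -> G0 (fun t => f (t - T) + T).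
Proof.
  intros -> Gf. exact (gg_comp _ _ _ (G0_sh n) (gg_comp _ _ _ Gf (G0_shi n))).
Qed.

Lemma DL x y p q n : G0 x -> G0 y -> supp_in x (fun t => p < t < q) ->
  supp_in y (fun t => p < t < q) -> q - p <= INR n -> KC x y.
Proof.
  intros Gx Gy Sx Sy Hn.
  destruct (G0_inv x Gx) as [xi Ix]. destruct (G0_inv y Gy) as [yi Iy].
  pose (T := INR n).
  pose (w := fun t => yi (t - T) + T).
  pose (z := fun t => xi (t - (T+T)) + (T+T)).
  assert (Gw : G0 w) by (apply (G0_shift _ _ n); [reflexivity| exact (gg_inv _ _ _ Gy Iy)]).
  assert (Gz : G0 z) by (apply (G0_shift _ _ (n+n)); [unfold T; rewrite plus_INR; reflexivity| exact (gg_inv _ _ _ Gx Ix)]).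
  assert (Iw : is_inverse w (fun t => y (t - T) + T)) by (apply shift_inv, inv_sym, Iy).
  assert (Iz : is_inverse z (fun t => x (t - (T+T)) + (T+T))) by (apply shift_inv, inv_sym, Ix).
  assert (Sw : supp_in w (fun t => p + T < t < q + T)) by (apply supp_shift, (supp_inv y); auto).
  assert (Sz : supp_in z (fun t => p + (T+T) < t < q + (T+T))) by (apply supp_shift, (supp_inv x); auto).
  assert (Sy' : supp_in (fun t => y (w t)) (fun t => (p < t < q) \/ (p + T < t < q + T))).
  { apply supp_compose; (eapply supp_mono; [eassumption|]); intros; cbv beta; tauto. }
  assert (Gy' : G0 (fun t => y (w t))) by exact (gg_comp _ _ _ Gy Gw).
  apply (KC_R x y w Gx Gy Gw).
  { intro t. apply (supp_comm _ _ _ _ _ _ Iw Ix Sw Sx). intros; unfold T in *; lra. }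
  apply (KC_L x _ z Gx Gy' Gz).
  { intro t. apply (supp_comm _ _ _ _ _ _ Iz (inv_comp _ _ _ _ Iy Iw) Sz Sy'). intros s H1 [H2|H2]; unfold T in *; lra. }
  intros xi' yi' H1 H2. apply gg_gen.
  exists (fun t => x (z t)), (fun t => y (w t)), xi', yi'.
  split.
  { apply gg_gen. exists xi, (fun t => t - (T+T)), x, (fun t => t + (T+T)).
    split; [exact (gg_inv _ _ _ Gx Ix)|]. split.
    { eapply gg_ext; [exact (G0_shi (n+n))|]. intro; unfold T; rewrite plus_INR; reflexivity. }
    split; [apply inv_sym; exact Ix|]. split; [split; intro; lra|]. reflexivity. }
  split.
  { apply gg_gen. exists yi, (fun t => t - T), y, (fun t => t + T).
    split; [exact (gg_inv _ _ _ Gy Iy)|]. split; [exact (G0_shi n)|].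
    split; [apply inv_sym; exact Iy|]. split; [split; intro; lra|]. reflexivity. }
  auto.
Qed.

Lemma b_left t : t <= 0 -> gen_b t = t.
Proof. intro; unfold gen_b; destruct (Rle_dec t 0); lra. Qed.
Lemma b_right t : 1 <= t -> gen_b t = t + 1.
Proof.
  intro; unfold gen_b; destruct (Rle_dec t 0); [lra|].
  destruct (Rle_dec t (1/2)); [lra|]. destruct (Rle_dec t 1); [|lra].
  replace t with 1 by lra. field.
Qed.
Lemma binv_left t : t <= 0 -> binv t = t.
Proof. intro; unfold binv; destruct (Rle_dec t 0); lra. Qed.
Lemma binv_right t : 2 <= t -> binv t = t - 1.
Proof.
  intro; unfold binv; destruct (Rle_dec t 0); [lra|].
  destruct (Rle_dec t 1); [lra|]. destruct (Rle_dec t 2); [|lra].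
  replace t with 2 by lra. field.
Qed.
Lemma c_supp : supp_in gen_c (fun t => 0 < t < 1).
Proof.
  intros t N. unfold gen_c. destruct (Rle_dec 0 t); [|lra].
  destruct (Rle_dec t 1); [|lra].
  destruct (Req_dec t 0) as [->|]; [field|].
  destruct (Req_dec t 1) as [->|]; [field|].
  exfalso; apply N; lra.
Qed.

Definition u t := gen_a (binv t).
Definition w t := binv (t - 3) + 3.
Definition z t := gen_b (t + 1) - 2.
Definition bw t := gen_b (w t).
Definition uz t := u (z t).

Lemma G0_binv : G0 binv.
Proof. exact (gg_inv _ _ _ G0_b b_binv). Qed.
Lemma G0_u : G0 u.
Proof. exact (gg_comp _ _ _ G0_a G0_binv). Qed.
Lemma G0_w : G0 w.
Proof.
  eapply gg_ext; [exact (G0_shift binv (INR 3) 3 eq_refl G0_binv)|].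
  intro t; unfold w; simpl; replace (1+1+1) with 3 by ring; reflexivity.
Qed.
Lemma G0_z : G0 z.
Proof.
  eapply gg_ext; [exact (gg_comp _ _ _ (G0_shi 2) (gg_comp _ _ _ G0_b (G0_sh 1)))|].
  intro t; unfold z; simpl. replace (1+1) with 2 by ring; reflexivity.
Qed.
Lemma G0_bw : G0 bw.
Proof. exact (gg_comp _ _ _ G0_b G0_w). Qed.
Lemma G0_uz : G0 uz.
Proof. exact (gg_comp _ _ _ G0_u G0_z). Qed.

Lemma u_supp : supp_in u (fun t => t < 2).
Proof. intros t N. unfold u, gen_a. rewrite binv_right; lra. Qed.
Lemma u_left t : t <= 0 -> u t = t + 1.
Proof. intro. unfold u, gen_a. rewrite binv_left; lra. Qed.
Lemma w_supp : supp_in w (fun t => 3 < t).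
Proof. intros t N. unfold w. rewrite binv_left; lra. Qed.
Lemma w_right t : 5 <= t -> w t = t - 1.
Proof. intro. unfold w. rewrite binv_right; lra. Qed.
Lemma bw_supp : supp_in bw (fun t => 0 < t < 5).
Proof.
  intros t N. unfold bw. destruct (Rle_dec t 0).
  - rewrite w_supp by lra. apply b_left; lra.
  - rewrite w_right by lra. rewrite b_right; lra.
Qed.
Lemma bw_supp' : supp_in bw (fun t => -1 < t < 5).
Proof. eapply supp_mono; [exact bw_supp|]. intros; lra. Qed.
Lemma z_supp : supp_in z (fun t => t < 0).
Proof. intros t N. unfold z. rewrite b_right; lra. Qed.
Lemma z_left t : t <= -1 -> z t = t - 1.
Proof. intro. unfold z. rewrite b_left; lra. Qed.
Lemma uz_supp : supp_in uz (fun t => -1 < t < 5).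
Proof.
  intros t N. unfold uz. destruct (Rle_dec t 0).
  - rewrite z_left by lra. rewrite u_left; lra.
  - rewrite z_supp by lra. apply u_supp; lra.
Qed.
Lemma c_supp' : supp_in gen_c (fun t => -1 < t < 5).
Proof. eapply supp_mono; [exact c_supp|]. intros; lra. Qed.

Lemma inv_of f : G0 f -> exists fi, is_inverse f fi.
Proof. apply G0_inv. Qed.

Lemma comm_of f g P Q : G0 f -> G0 g -> supp_in f P -> supp_in g Q ->
  (forall t, P t -> Q t -> False) -> forall t, f (g t) = g (f t).
Proof.
  intros Gf Gg Sf Sg D. destruct (G0_inv f Gf) as [fi If]. destruct (G0_inv g Gg) as [gi Ig].
  exact (supp_comm _ _ _ _ _ _ If Ig Sf Sg D).
Qed.

Lemma six : 5 - -1 <= INR 6.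
Proof. simpl; lra. Qed.

Lemma KC_u_b : KC u gen_b.
Proof.
  apply (KC_R u gen_b w G0_u G0_b G0_w).
  { apply (comm_of _ _ _ _ G0_w G0_u w_supp u_supp). intros; lra. }
  apply (KC_L u bw z G0_u G0_bw G0_z).
  { apply (comm_of _ _ _ _ G0_z G0_bw z_supp bw_supp). intros; lra. }
  exact (DL uz bw (-1) 5 6 G0_uz G0_bw uz_supp bw_supp' six).
Qed.


Lemma KC_u_c : KC u gen_c.
Proof.
  apply (KC_L u gen_c z G0_u G0_c G0_z).
  { apply (comm_of _ _ _ _ G0_z G0_c z_supp c_supp). intros; lra. }
  exact (DL uz gen_c (-1) 5 6 G0_uz G0_c uz_supp c_supp' six).
Qed.

Lemma KC_b_c : KC gen_b gen_c.
Proof.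
  apply KC_swap.
  apply (KC_R gen_c gen_b w G0_c G0_b G0_w).
  { apply (comm_of _ _ _ _ G0_w G0_c w_supp c_supp). intros; lra. }
  exact (DL gen_c bw (-1) 5 6 G0_c G0_bw c_supp' bw_supp' six).
Qed.

Lemma a_ub t : u (gen_b t) = gen_a t.
Proof. unfold u. destruct b_binv as [A B]. rewrite A. reflexivity. Qed.

Lemma KC_a_b : KC gen_a gen_b.
Proof.
  apply (KC_ext (fun t => u (gen_b t)) gen_b); [| exact a_ub | reflexivity].
  apply KC_comp; [exact G0_u | exact G0_b | exact KC_u_b | apply KC_self].
Qed.

Lemma KC_a_c : KC gen_a gen_c.
Proof.
  apply (KC_ext (fun t => u (gen_b t)) gen_c); [| exact a_ub | reflexivity].
  apply KC_comp; [exact G0_u | exact G0_b | exact KC_u_c | exact KC_b_c].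
Qed.

Definition gens (f : R -> R) := f = gen_a \/ f = gen_b \/ f = gen_c.

Lemma KC_base s t : gens s -> gens t -> KC s t.
Proof.
  intros [ -> | [ -> | -> ] ] [ -> | [ -> | -> ] ];
  first [ apply KC_self | apply KC_a_b | apply KC_a_c | apply KC_b_c
        | apply KC_swap; first [apply KC_a_b | apply KC_a_c | apply KC_b_c] ].
Qed.

Lemma KC_gen_left s : gens s -> forall g, G0 g -> KC s g.
Proof.
  intros Hs g Hg. assert (Gs : G0 s) by (apply gg_gen; exact Hs).
  induction Hg as [f Hf | | f g Hf IHf Hg IHg | f g Hf IHf Hfg].
  - apply KC_base; auto.
  - apply KC_id_r.
  - apply KC_swap. apply KC_comp; auto; apply KC_swap; auto.
  - apply KC_swap. apply (KC_inv f g s); auto.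
Qed.

Lemma KC_all f : G0 f -> forall g, G0 g -> KC f g.
Proof.
  intro Hf. induction Hf as [f Hf | | f1 f2 Hf1 IH1 Hf2 IH2 | f f' Hf IHf Hff']; intros g Hg.
  - apply KC_gen_left; auto.
  - apply KC_id_l.
  - apply KC_comp; auto.
  - apply (KC_inv f f' g); auto. apply KC_swap; auto.
Qed.

Theorem mainTheorem5 :
  forall f : R -> R, derived G0 f <-> derived (derived G0) f.
Proof.
  intro f; split; intro H; induction H.
  - destruct H as [f0 [g0 [fi [gi [Hf [Hg [Ifi [Igi ->]]]]]]]].
    exact (KC_all f0 Hf g0 Hg fi gi Ifi Igi).
  - apply gg_id.
  - apply gg_comp; auto.
  - eapply gg_inv; eauto.
  - destruct H as [f0 [g0 [fi [gi [Hf [Hg [Ifi [Igi ->]]]]]]]].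
    exact (gg_comp _ _ _ (gg_inv _ _ _ Hf Ifi) (gg_comp _ _ _ (gg_inv _ _ _ Hg Igi) (gg_comp _ _ _ Hf Hg))).
  - apply gg_id.
  - apply gg_comp; auto.
  - eapply gg_inv; eauto.
Qed.
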